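(* In the Ising-driven environment, let $\delta>0$. If $\delta<d^+$ and $$2h-4\beta d\ \ge\ \ln\frac{d^-+\delta}{d^+-\delta}+\ln\max_{|e|=1}\frac{\omega^+(e)}{\omega^-(e)},$$ then for every $x\in\mathbb Z^d$, $P$-a.s., $$\inf_{f:\{\pm e_i\}_{i=1}^d\to(0,1]}\left[E\Big(\frac{1}{\sum_{|e|=1}f(e)\,\omega(x,x+e)}\ \Big|\ \mathcal F_{\{x\}^c}\Big)^{-1}E\Big(\frac{d(x,\omega)\cdot e_1}{\sum_{|e|=1}f(e)\,\omega(x,x+e)}\ \Big|\ \mathcal F_{\{x\}^c}\Big)\right]\ge\delta .$$
   Context: Ising model: for $\beta\ge0$, $h>0$, $\pi=\pi_{\beta,h}$ is a probability measure on $\{-1,+1\}^{\mathbb Z^d}$ with $\pi(\sigma(x)=\pm1\mid\sigma(y),y\ne x)=\exp(\pm(\beta S_x+h))/(\exp(\beta S_x+h)+\exp(-(\beta S_x+h)))$, where $S_x=\sum_{|e|=1}\sigma(x+e)$. Let $\omega^+,\omega^-$ be probability vectors on $\{e\in\mathbb Z^d:|e|=1\}$ with $\omega^\pm(e)>0$ for all $|e|=1$, $d^+:=\big(\sum_{|e|=1}\omega^+(e)e\big)\cdot e_1>0$ and $-d^-:=\big(\sum_{|e|=1}\omega^-(e)e\big)\cdot e_1<0$. The environment is $\omega(x,x+e)=\omega^+(e)$ if $\sigma(x)=+1$ and $\omega(x,x+e)=\omega^-(e)$ if $\sigma(x)=-1$; $P$ is the law of $\omega$ when $\sigma\sim\pi$,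 and $E$ its expectation. $d(x,\omega)=\sum_{|e|=1}e\,\omega(x,x+e)$ is the local drift; $\mathcal F_{\{x\}^c}=\sigma(\omega_z:z\ne x)$; $e_1,\dots,e_d$ are the canonical unit vectors. *)

(* Defs.v *)
From HB Require Import structures.
From mathcomp Require Import all_boot all_order all_algebra.
From mathcomp Require Import all_classical all_reals all_analysis.
Set Implicit Arguments. Unset Strict Implicit. Unset Printing Implicit Defensive.
Import Order.TTheory GRing.Theory Num.Theory.
Local Open Scope classical_set_scope.
Local Open Scope ring_scope.

(* Unit vectors of Z^d: e = (i, b) stands for +e_i (b = true) or -e_i (b = false). *)
Definition Dir (d : nat) := ('I_d * bool)%type.
Definition Site (d : nat) := 'I_d -> int.
(* Spin configurations: true = +1, false = -1. *)
Definition Config (d : nat) := Site d -> bool.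

Definition sgnR {R : realType} (b : bool) : R := if b then 1 else -1.
Definition sgnZ (b : bool) : int := if b then 1 else -1.

Definition shift d (x : Site d) (e : Dir d) : Site d :=
  fun i => if i == e.1 then x i + sgnZ e.2 else x i.

(* e . e_1 (e_1 is the first canonical vector, coordinate index 0) *)
Definition dir_e1 {R : realType} d (e : Dir d) : R :=
  if val e.1 == 0%N then sgnR e.2 else 0.

Definition Ssum {R : realType} d (s : Config d) (x : Site d) : R :=
  \sum_(e : Dir d) sgnR (s (shift x e)).

(* pi(sigma(x) = b | sigma(y), y <> x) *)
Definition ising_cond {R : realType} d (beta h : R) (x : Site d) (b : bool)
  (s : Config d) : R :=
  expR (sgnR b * (beta * Ssum s x + h)) /
  (expR (beta * Ssum s x + h) + expR (- (beta * Ssum s x + h))).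

Definition coord_gen (d : nat) : set (set (Config d)) :=
  [set A | exists y b, A = [set s : Config d | s y = b]].
Definition ConfigM (d : nat) := g_sigma_algebraType (@coord_gen d).

Definition spins_off d (x : Site d) : set (set (ConfigM d)) :=
  <<s [set A | exists y b, y <> x /\ A = [set s : ConfigM d | s y = b]] >>.

Definition is_ising {R : realType} d (P : probability (ConfigM d) R) (beta h : R) :=
  forall (x : Site d) (b : bool) (B : set (ConfigM d)), spins_off x B ->
    P ([set s : ConfigM d | s x = b] `&` B) =
    (\int[P]_(s in B) (ising_cond beta h x b s)%:E)%E.

(* the environment omega(z, z+.) *)
Definition env {R : realType} d (wp wm : Dir d -> R) (s : Config d) (z : Site d)
  : Dir d -> R := if s z then wp else wm.

Definition Fxc {R : realType} d (wp wm : Dir d -> R) (x : Site d)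
  : set (set (ConfigM d)) :=
  <<s [set A | exists z, z <> x /\
        exists V : set (Dir d -> R), A = [set s : ConfigM d | V (env wp wm s z)]] >>.

(* kappa is a regular conditional distribution of sigma(x) (equivalently of
   omega_x) given the sigma-algebra G, under P. *)
Definition is_rcd {R : realType} d (P : probability (ConfigM d) R)
  (G : set (set (ConfigM d))) (x : Site d) (kappa : ConfigM d -> bool -> R) :=
  [/\ forall b (V : set R), measurable V -> G ((fun s => kappa s b) @^-1` V),
      forall s b, 0 <= kappa s b,
      forall s, kappa s true + kappa s false = 1 &
      forall b (B : set (ConfigM d)), G B ->
        P ([set s : ConfigM d | s x = b] `&` B) =
        (\int[P]_(s in B) (kappa s b)%:E)%E].

(* E( g(omega_x) | G )(s), computed with the regular conditional distribution kappa *)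
Definition cexp {R : realType} d (wp wm : Dir d -> R) (kappa : ConfigM d -> bool -> R)
  (g : (Dir d -> R) -> R) (s : ConfigM d) : R :=
  kappa s true * g wp + kappa s false * g wm.

Definition wsum {R : realType} d (f w : Dir d -> R) : R := \sum_(e : Dir d) f e * w e.
(* d(x, omega) . e_1 for omega_x = w *)
Definition drift1 {R : realType} d (w : Dir d -> R) : R := \sum_(e : Dir d) w e * dir_e1 e.

Definition drift_ratio {R : realType} d (wp wm : Dir d -> R) (kappa : ConfigM d -> bool -> R)
  (f : Dir d -> R) (s : ConfigM d) : R :=
  (cexp wp wm kappa (fun w => 1 / wsum f w) s)^-1 *
  cexp wp wm kappa (fun w => drift1 w / wsum f w) s.

Definition admissible {R : realType} d : set (Dir d -> R) :=
  [set f | forall e, 0 < f e <= 1].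

(* Main.v *)
Require Import Defs.
From HB Require Import structures.
From mathcomp Require Import all_boot all_order all_algebra.
From mathcomp Require Import all_classical all_reals all_analysis.
From mathcomp Require Import ring lra measurable_realfun.
Import Order.TTheory GRing.Theory Num.Theory.
Import numFieldNormedType.Exports.
Local Open Scope classical_set_scope.
Local Open Scope ring_scope.
Set Implicit Arguments. Unset Strict Implicit.

Lemma g_cont (R : realType) (sb beta h : R) :
  continuous (fun t : R => expR (sb * (beta * t + h)) /
     (expR (beta * t + h) + expR (- (beta * t + h)))).
Proof.
have cl : continuous (fun t : R => beta * t + h).
  move=> t; apply: continuousD; [exact: mulrl_continuous | exact: cst_continuous].
have ce : forall k : R, continuous (fun t : R => expR (k * (beta * t + h))).
  move=> k t; apply: continuous_comp; last exact: continuous_expR.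
  apply: continuous_comp; [exact: cl | exact: mulrl_continuous].
have cd : continuous (fun t : R => (expR (beta * t + h) + expR (- (beta * t + h)))^-1).
  move=> t.
  have e1 := ce 1 t; have e2 := ce (-1) t.
  have E1 : (fun t : R => expR (1 * (beta * t + h))) = (fun t => expR (beta * t + h)).
    by apply: funext => u; rewrite mul1r.
  have E2 : (fun t : R => expR (-1 * (beta * t + h))) = (fun t => expR (- (beta * t + h))).
    by apply: funext => u; rewrite mulN1r.
  rewrite E1 E2 in e1 e2.
  have := @continuousV R R (fun u => expR (beta * u + h) + expR (- (beta * u + h))) t.
  apply.
    by apply: lt0r_neq0; apply: addr_gt0; apply: expR_gt0.
  exact: (continuousD e1 e2).
move=> t; exact: (continuousM (ce sb t) (cd t)).
Qed.
Lemma bool_pre d (S : set (set (ConfigM d))) (HS : sigma_algebra setT S)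
  (z : Site d) (Hz : forall b, S [set s : ConfigM d | s z = b]) (Q : bool -> Prop) :
  S [set s : ConfigM d | Q (s z)].
Proof.
case: HS => S0 SC _.
have [Qt|Qt] := pselect (Q true); have [Qf|Qf] := pselect (Q false).
- have -> : [set s : ConfigM d | Q (s z)] = setT.
    by apply/seteqP; split => s // _ /=; case: (s z).
  by rewrite -(setD0 setT); exact: SC.
- have -> : [set s : ConfigM d | Q (s z)] = [set s | s z = true].
    by apply/seteqP; split => s /=; case: (s z).
  exact: Hz.
- have -> : [set s : ConfigM d | Q (s z)] = [set s | s z = false].
    by apply/seteqP; split => s /=; case: (s z).
  exact: Hz.
- have -> : [set s : ConfigM d | Q (s z)] = set0.
    by apply/seteqP; split => s /=; case: (s z).
  exact: S0.
Qed.

Lemma coord_meas d (z : Site d) (Q : bool -> Prop) :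
  measurable [set s : ConfigM d | Q (s z)].
Proof.
have HS : sigma_algebra setT (measurable : set (set (ConfigM d))).
  exact: sigma_algebra_measurable.
have Hz : forall b, (measurable : set (set (ConfigM d))) [set s : ConfigM d | s z = b].
  by move=> b; apply: sub_sigma_algebra; exists z, b.
exact: (bool_pre HS Hz Q).
Qed.

Lemma Fxc_sub (R : realType) d (wp wm : Dir d -> R) (x : Site d)
  (S : set (set (ConfigM d))) (HS : sigma_algebra setT S)
  (Hz : forall z b, z <> x -> S [set s : ConfigM d | s z = b]) :
  Fxc wp wm x `<=` S.
Proof.
apply: smallest_sub => // A [z [zx [V ->]]].
exact: (bool_pre HS (fun b => Hz z b zx) (fun b => V (if b then wp else wm))).
Qed.

Lemma Fxc_meas (R : realType) d (wp wm : Dir d -> R) (x : Site d) B :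
  Fxc wp wm x B -> measurable B.
Proof.
apply: Fxc_sub => //; first exact: sigma_algebra_measurable.
by move=> z b _; apply: sub_sigma_algebra; exists z, b.
Qed.

Lemma Fxc_spins (R : realType) d (wp wm : Dir d -> R) (x : Site d) B :
  Fxc wp wm x B -> spins_off x B.
Proof.
apply: Fxc_sub => //; first exact: smallest_sigma_algebra.
by move=> z b zx; apply: sub_sigma_algebra; exists z, b.
Qed.

Lemma sgn_meas (R : realType) d (y : Site d) :
  measurable_fun setT (fun s : ConfigM d => (sgnR (s y) : R)).
Proof.
move=> _ Y _; rewrite setTI.
exact: (coord_meas y (fun b => Y (sgnR b))).
Qed.

Lemma Ssum_meas (R : realType) d (x : Site d) :
  measurable_fun setT (fun s : ConfigM d => (Ssum s x : R)).
Proof.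
rewrite /Ssum; apply: measurable_sum => e; exact: sgn_meas.
Qed.

Lemma ising_meas (R : realType) d (beta h : R) (x : Site d) b :
  measurable_fun setT (fun s : ConfigM d => (ising_cond beta h x b s : R)).
Proof.
have -> : (fun s : ConfigM d => (ising_cond beta h x b s : R)) =
  (fun t : R => expR (sgnR b * (beta * t + h)) /
     (expR (beta * t + h) + expR (- (beta * t + h)))) \o (fun s : ConfigM d => (Ssum s x : R)).
  by [].
apply: measurableT_comp; last exact: Ssum_meas.
exact: continuous_measurable_fun (@g_cont R (sgnR b) beta h).
Qed.

Lemma Ssum_ge (R : realType) d (s : Config d) (x : Site d) :
  - (2 * d%:R) <= (Ssum s x : R).
Proof.
rewrite /Ssum.
apply: le_trans (_ : \sum_(e : Dir d) (-1 : R) <= _).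
  rewrite sumr_const /Dir card_prod card_ord card_bool.
  by rewrite mulNrn natrM mulrC.
apply: ler_sum => e _; rewrite /sgnR; case: (s _) => //.
Qed.

Lemma ising_lb (R : realType) d (beta h : R) (hbeta : 0 <= beta) (x : Site d)
  (s : ConfigM d) :
  expR (2 * h - 4 * beta * d%:R) / (1 + expR (2 * h - 4 * beta * d%:R))
   <= ising_cond beta h x true s.
Proof.
set c := expR _; rewrite /ising_cond /sgnR mul1r.
set S := Ssum s x; set u := beta * S + h.
have HS := Ssum_ge R s x; rewrite -/S in HS.
set E := expR u.
have E0 : 0 < E by apply: expR_gt0.
have Hc : c <= E ^+ 2.
  rewrite /E expr2 -expRD /c ler_expR /u.
  have : 0 <= beta * (S + 2 * d%:R) by apply: mulr_ge0 => //; lra.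
  nra.
have c0 : 0 < c by apply: expR_gt0.
rewrite expRN -/E.
have -> : E / (E + E^-1) = E ^+ 2 / (1 + E ^+ 2).
  have nz1 : E != 0 by apply: lt0r_neq0.
  have nz2 : E + E^-1 != 0 by apply: lt0r_neq0; apply: addr_gt0; rewrite ?invr_gt0.
  have nz3 : 1 + E ^+ 2 != 0 by apply: lt0r_neq0; nra.
  by field; rewrite ?nz1 ?nz2 ?nz3.
rewrite -subr_ge0.
have -> : E ^+ 2 / (1 + E ^+ 2) - c / (1 + c) = (E ^+ 2 - c) / ((1 + E ^+ 2) * (1 + c)).
  have nz3 : 1 + E ^+ 2 != 0 by apply: lt0r_neq0; nra.
  have nz4 : 1 + c != 0 by apply: lt0r_neq0; nra.
  by field; rewrite ?nz3 ?nz4.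
apply: divr_ge0; first by rewrite subr_ge0.
apply: mulr_ge0; nra.
Qed.
Lemma alg_part (R : realType) (d : nat) (hd : (0 < d)%N)
  (wp wm : Dir d -> R)
  (hwp : forall e, 0 < wp e) (hwm : forall e, 0 < wm e)
  (hdm : 0 < - drift1 wm)
  (delta : R) (hdelta : 0 < delta) (hdd : delta < drift1 wp) (c : R)
  (Hc : (- drift1 wm + delta) / (drift1 wp - delta) *
        \big[Num.max/0]_(e : Dir d) (wp e / wm e) <= c)
  (kappa : ConfigM d -> bool -> R) (s : ConfigM d)
  (k0 : 0 <= kappa s true) (k1 : 0 <= kappa s false)
  (ks : kappa s true + kappa s false = 1)
  (kc : c * kappa s false <= kappa s true)
  (f : Dir d -> R) (hf : admissible f) :
  delta <= drift_ratio wp wm kappa f s.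
Proof.
rewrite /drift_ratio /cexp.
set kt := kappa s true; set kf := kappa s false.
set M := \big[Num.max/0]_(e : Dir d) (wp e / wm e).
set Wp := wsum f wp; set Wm := wsum f wm.
set Dp := drift1 wp; set Dm := drift1 wm.
have fpos e : 0 < f e by case/andP: (hf e).
have Wp0 : 0 < Wp.
  rewrite /Wp /wsum (bigD1 (Ordinal hd, true)) //=.
  by apply: ltr_pwDl; [apply: mulr_gt0 | apply: sumr_ge0 => i _; apply: mulr_ge0; apply: ltW].
have Wm0 : 0 < Wm.
  rewrite /Wm /wsum (bigD1 (Ordinal hd, true)) //=.
  by apply: ltr_pwDl; [apply: mulr_gt0 | apply: sumr_ge0 => i _; apply: mulr_ge0; apply: ltW].
have WpM : Wp <= M * Wm.
  rewrite /Wp /Wm /wsum mulr_sumr; apply: ler_sum => e _.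
  have : wp e / wm e <= M by apply: (le_bigmax 0 (fun e => wp e / wm e) e).
  rewrite ler_pdivrMr // => h.
  by rewrite mulrCA; apply: ler_wpM2l; [apply: ltW|].
have A0 : 0 < Dp - delta by rewrite subr_gt0.
have B0 : 0 < - Dm + delta by apply: addr_gt0.
have Hc' : (- Dm + delta) * M <= c * (Dp - delta).
  by rewrite -ler_pdivrMr // mulrAC.
have M0 : 0 <= M.
  apply: le_trans (le_bigmax 0 (fun e => wp e / wm e) (Ordinal hd, true)).
  by apply: ltW; apply: divr_gt0.
have key : kf * (- Dm + delta) * Wp <= kt * (Dp - delta) * Wm.
  apply: (le_trans (y := kf * (- Dm + delta) * (M * Wm))).
    by apply: ler_wpM2l => //; apply: mulr_ge0 => //; apply: ltW.
  rewrite mulrA.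
  apply: ler_wpM2r; first by apply: ltW.
  apply: (le_trans (y := kf * (c * (Dp - delta)))).
    by rewrite -mulrA; apply: ler_wpM2l.
  by rewrite mulrA [kf * c]mulrC; apply: ler_wpM2r => //; apply: ltW.
have X0 : 0 < kt * (1 / Wp) + kf * (1 / Wm).
  rewrite !div1r.
  have : 0 < kt \/ 0 < kf.
    have [h|h] := boolP (0 < kt); first by left.
    right; have kt0 : kt = 0 by apply/eqP; rewrite eq_le k0 andbT leNgt.
    by move: ks; rewrite -/kt -/kf kt0 add0r => ->.
  have t1 : 0 <= kt / Wp by apply: divr_ge0 => //; apply: ltW.
  have t2 : 0 <= kf / Wm by apply: divr_ge0 => //; apply: ltW.
  case=> h.
    have : 0 < kt / Wp by apply: divr_gt0.
    by move=> ?; lra.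
  have : 0 < kf / Wm by apply: divr_gt0.
  by move=> ?; lra.
rewrite -ler_pdivrMl ?invr_gt0 // invrK.
rewrite -subr_ge0.
have -> : kt * (Dp / Wp) + kf * (Dm / Wm) - (kt * (1 / Wp) + kf * (1 / Wm)) * delta
   = (kt * (Dp - delta) * Wm - kf * (- Dm + delta) * Wp) / (Wp * Wm).
  by field; apply/andP; split; apply: lt0r_neq0.
apply: divr_ge0; last by apply: ltW; apply: mulr_gt0.
by rewrite subr_ge0.
Qed.

Theorem lemma5p18 (R : realType) (d : nat) (hd : (0 < d)%N)
  (beta h : R) (hbeta : 0 <= beta) (hh : 0 < h)
  (wp wm : Dir d -> R)
  (hwp : forall e, 0 < wp e) (hwm : forall e, 0 < wm e)
  (swp : \sum_(e : Dir d) wp e = 1) (swm : \sum_(e : Dir d) wm e = 1)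
  (hdp : 0 < drift1 wp) (hdm : 0 < - drift1 wm)
  (P : probability (ConfigM d) R) (HP : is_ising P beta h)
  (delta : R) (hdelta : 0 < delta) (hdd : delta < drift1 wp)
  (Hcond : ln ((- drift1 wm + delta) / (drift1 wp - delta))
           + ln (\big[Num.max/0]_(e : Dir d) (wp e / wm e))
           <= 2 * h - 4 * beta * d%:R) :
  forall (x : Site d) (kappa : ConfigM d -> bool -> R),
    is_rcd P (Fxc wp wm x) x kappa ->
    {ae P, forall s : ConfigM d,
       delta <= inf [set drift_ratio wp wm kappa f s | f in @admissible R d]}.
Proof.
move=> x kappa [Hm Hge0 Hsum Hint].
set c := expR (2 * h - 4 * beta * d%:R).
set a := c / (1 + c).
have c0 : 0 < c by apply: expR_gt0.
have Hq : (- drift1 wm + delta) / (drift1 wp - delta) *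
        \big[Num.max/0]_(e : Dir d) (wp e / wm e) <= c.
  set q := _ / _; set M := \big[Num.max/0]_(e : Dir d) _.
  have qpos : q \in Num.pos.
    by rewrite posrE; apply: divr_gt0; [apply: addr_gt0 | rewrite subr_gt0].
  have Mpos : M \in Num.pos.
    rewrite posrE; apply: lt_le_trans (le_bigmax 0 (fun e => wp e / wm e) (Ordinal hd, true)).
    exact: divr_gt0.
  have qMpos : q * M \in Num.pos by rewrite posrE mulr_gt0 // -posrE.
  by rewrite -(lnK qMpos) /c ler_expR lnM.
have det : forall s, a <= kappa s true ->
    delta <= inf [set drift_ratio wp wm kappa f s | f in @admissible R d].
  move=> s ha; apply: lb_le_inf.
    exists (drift_ratio wp wm kappa (fun _ => 1) s), (fun _ => 1) => //.
    by move=> e; rewrite ltr01 lexx.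
  move=> _ [f hf <-].
  apply: (alg_part hd hwp hwm hdm hdelta hdd Hq) => //.
  have kf : kappa s false = 1 - kappa s true by rewrite -(Hsum s) addrC addKr.
  rewrite kf; move: ha; rewrite /a ler_pdivrMr; last by rewrite addr_gt0.
  by move=> ?; lra.
have negl : P.-negligible [set s | kappa s true < a].
  pose r (n : nat) := a - n.+1%:R^-1.
  pose B n := (fun s => kappa s true) @^-1` `]-oo, r n[.
  have GB n : Fxc wp wm x (B n) by apply: Hm; exact: measurable_itv.
  have mB n : measurable (B n) := Fxc_meas (GB n).
  have PB n : P (B n) = 0.
    have E1 := Hint true (B n) (GB n).
    have E2 := HP x true (B n) (Fxc_spins (GB n)).
    have L1 : (\int[P]_(s in B n) (kappa s true)%:E <= (r n)%:E * P (B n))%E.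
      rewrite -integral_cst //; apply: ge0_le_integral => //.
      - by move=> s _; rewrite lee_fin; exact: Hge0.
      - apply/measurable_EFinP => _ Y mY; apply: measurableI => //.
        by apply: Fxc_meas; exact: Hm.
      - move=> s; rewrite /B /preimage /= in_itv /= => hs; rewrite lee_fin; exact: ltW.
    have L2 : (a%:E * P (B n) <= \int[P]_(s in B n) (ising_cond beta h x true s)%:E)%E.
      rewrite -integral_cst //; apply: ge0_le_integral => //.
      - by move=> s _; rewrite lee_fin; apply: divr_ge0; [apply: ltW | apply: addr_ge0 => //; apply: ltW].
      - apply/measurable_EFinP; apply: measurable_funS (ising_meas beta h x true) => //.
      - by move=> s _; rewrite lee_fin; exact: ising_lb.
    rewrite -E2 E1 in L2.
    have rn : r n < a by rewrite /r ltrBlDr ltrDl invr_gt0 ltr0n.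
    have L := le_trans L2 L1.
    have p0 : (0 <= P (B n))%E := measure_ge0 P (B n).
    have p1 : (P (B n) <= 1)%E := probability_le1 P (mB n).
    have Pp : P (B n) = (fine (P (B n)))%:E.
      by rewrite fineK // ge0_fin_numE // (le_lt_trans p1) // ltry.
    move: L p0; rewrite Pp -!EFinM !lee_fin; set p := fine _ => L p0.
    congr (_%:E); apply/eqP; rewrite eq_le p0 andbT.
    have ra : 0 < a - r n by rewrite subr_gt0.
    have : (a - r n) * p <= 0 by rewrite mulrBl subr_le0.
    by rewrite pmulr_rle0.
  apply: (negligibleS _ (negligible_bigcup (fun n => _ : P.-negligible (B n)))).
    move=> s /= ks; have [k hk] := ltr_add_invr ks; exists k => //.
    by rewrite /B /preimage /= in_itv /= /r -(ltrD2r (k.+1%:R^-1)) subrK.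
  by move=> n; exists (B n); split.
rewrite /prop_near1 /almost_everywhere.
apply: (negligibleS _ negl) => s /= nQ.
by rewrite ltNge; apply/negP => ha; apply: nQ; exact: det.
Qed.
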